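(* Let $G$ be a finite simple graph of order $n\ge 3$ and let $e(G)$ denote its number of edges. (a) Suppose every vertex of $G$ lies in a cycle of $G$. Then $crx_1(G)=e(G)$ if and only if $G$ is the cycle $C_n$. (b) Suppose $G$ is $2$-connected. Then $crx_2(G)=e(G)$ if and only if $G$ is minimally $2$-connected. (c) Suppose $G$ is Hamiltonian, and let $1\le k\le n$. Then $crx_k(G)=e(G)$ if and only if $G$ is the cycle $C_n$.
   Context: An edge-coloured cycle is rainbow if its edges have distinct colours. For $k\ge 1$, let $\mathcal F_k$ be the family of graphs in which any $k$ vertices lie in a common cycle. For $G\in\mathcal F_k$, a $k$-rainbow cycle colouring of $G$ is an edge-colouring such that every set of $k$ vertices lies in some rainbow cycle; $crx_k(G)$, the $k$-rainbow cycle index, is the minimum number of colours in a $k$-rainbow cycle colouring of $G$. A graph is minimally $2$-connected if it is $2$-connected and deleting any edge destroys $2$-connectivity. *)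

(* Defs.v *)
(* Finite simple graphs as symmetric irreflexive relations
   on a finType. *)
From mathcomp Require Import all_boot.
From Stdlib Require Import ClassicalEpsilon.
Set Implicit Arguments. Unset Strict Implicit. Unset Printing Implicit Defensive.

Section Graphs.
Variables (T : finType) (e : rel T).

Definition edges : {set {set T}} :=
  [set s : {set T} | [exists x, exists y, e x y && (s == [set x; y])]].

Definition gcycle (p : seq T) : Prop :=
  [/\ 3 <= size p, uniq p & path.cycle e p].

Definition cycle_edges (p : seq T) : seq {set T} :=
  [seq [set xy.1; xy.2] | xy <- zip p (rot 1 p)].

(* An edge-colouring is any function on 2-sets of vertices; only its values
   on edges matter. *)
Definition rainbow (c : {set T} -> nat) (p : seq T) : Prop :=
  uniq (map c (cycle_edges p)).

Definition num_colours (c : {set T} -> nat) : nat :=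
  size (undup (map c (enum edges))).

Definition in_F (k : nat) : Prop :=
  forall S : {set T}, #|S| = k ->
    exists p, gcycle p /\ (forall x, x \in S -> x \in p).

Definition k_rainbow_cycle_colouring (k : nat) (c : {set T} -> nat) : Prop :=
  forall S : {set T}, #|S| = k ->
    exists p, [/\ gcycle p, (forall x, x \in S -> x \in p) & rainbow c p].

Definition crx_pred (k m : nat) : Prop :=
  exists c, k_rainbow_cycle_colouring k c /\ num_colours c = m.

Definition pdec (P : Prop) : bool :=
  if excluded_middle_informative P then true else false.

Lemma pdecP (P : Prop) : reflect P (pdec P).
Proof. rewrite /pdec; case: excluded_middle_informative => h; constructor => //. Qed.

(* crx_k(G): the minimum number of colours of a k-rainbow cycle colouring
   (defined as 0 when no such colouring exists, i.e. outside F_k). *)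
Definition crx (k : nat) : nat :=
  match excluded_middle_informative (exists m, crx_pred k m) with
  | left h =>
      @ex_minn (fun m => pdec (crx_pred k m))
        (let: ex_intro m hm := h in ex_intro _ m (introT (pdecP _) hm))
  | right _ => 0
  end.

Definition connected_on (A : {set T}) : Prop :=
  forall x y, x \in A -> y \in A ->
    connect [rel u v | [&& e u v, u \in A & v \in A]] x y.

Definition two_connected : Prop :=
  [/\ 3 <= #|T|, connected_on setT & forall v, connected_on (~: [set v])].

Definition hamiltonian : Prop :=
  exists p, gcycle p /\ size p = #|T|.

Definition cycle_rel (n : nat) (i j : 'I_n) : bool :=
  (val j == (val i).+1 %% n) || (val i == (val j).+1 %% n).

Definition is_cycle_graph : Prop :=
  exists f : 'I_#|T| -> T, bijective f /\
    forall i j, e (f i) (f j) = cycle_rel i j.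

End Graphs.

Definition del_edge (T : finType) (e : rel T) (f : {set T}) : rel T :=
  [rel u v | e u v && ([set u; v] != f)].

Definition min_two_connected (T : finType) (e : rel T) : Prop :=
  two_connected e /\
  forall f, f \in edges e -> ~ two_connected (del_edge e f).

(* Main.v *)
Require Import Defs.
From mathcomp Require Import all_boot.
From mathcomp Require Import zify.
From Stdlib Require Import Classical ClassicalEpsilon.
Set Implicit Arguments. Unset Strict Implicit. Unset Printing Implicit Defensive.

Section Basic.
Variable T : finType.
Implicit Types (p q : seq T) (x y u v : T).

Lemma set2_eq (a b c d : T) :
  [set a; b] = [set c; d] -> (a = c /\ b = d) \/ (a = d /\ b = c).
Proof.
move=> E.
have ha : a \in [set c; d] by rewrite -E !inE eqxx.
have hb : b \in [set c; d] by rewrite -E !inE eqxx orbT.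
have hc : c \in [set a; b] by rewrite E !inE eqxx.
have hd : d \in [set a; b] by rewrite E !inE eqxx orbT.
move: ha hb hc hd; rewrite !inE.
case/orP=> /eqP ha; case/orP=> /eqP hb; subst => //; try by [left|right].
- by move=> _ /orP[] /eqP ->; [left|left].
- by move=> /orP[] /eqP -> _; [right|right].
Qed.

Fixpoint ep x q : seq {set T} :=
  if q is y :: q' then [set x; y] :: ep y q' else [::].

Lemma ep_cat x q1 q2 : ep x (q1 ++ q2) = ep x q1 ++ ep (last x q1) q2.
Proof. by elim: q1 x => [|y q1 IH] x //=; rewrite IH. Qed.

Lemma ep_rcons x q y : ep x (rcons q y) = rcons (ep x q) [set last x q; y].
Proof. by rewrite -cats1 ep_cat cats1. Qed.

Lemma cycle_edges_cons x q : cycle_edges (x :: q) = ep x (rcons q x).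
Proof.
rewrite /cycle_edges rot1_cons.
elim: q x {2 4}x => [|y q IH] x z //=.
by rewrite IH.
Qed.

Lemma mem_ep x q S : S \in ep x q ->
  exists u v, [/\ S = [set u; v], u \in x :: q & v \in q].
Proof.
elim: q x => [|y q IH] x //=; rewrite inE => /orP[/eqP ->|].
  by exists x, y; rewrite !inE !eqxx.
case/IH=> u [v [-> hu hv]]; exists u, v; split => //.
  by rewrite inE hu orbT.
by rewrite inE hv orbT.
Qed.

Lemma uniq_ep x q : uniq (x :: q) -> uniq (ep x q).
Proof.
elim: q x => [|y q IH] x //= /andP[hx /andP[hy hq]].
have -> : uniq (ep y q) by apply: IH; rewrite /= hy hq.
rewrite andbT; apply/negP => /mem_ep [u [v [E hu hv]]].
have : x \in [set u; v] by rewrite -E !inE eqxx.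
rewrite !inE => /orP[] /eqP ex; subst x.
- by rewrite hu in hx.
- by rewrite inE hv orbT in hx.
Qed.

Lemma zip_next p : uniq p -> zip p (rot 1 p) = [seq (u, next p u) | u <- p].
Proof.
move=> Up; case: p Up => [|y p'] Up //.
rewrite rot1_cons.
have x0 := y.
apply: (@eq_from_nth _ (x0, x0)).
  by rewrite size_zip size_map size_rcons /= minnn.
move=> i; rewrite size_zip size_rcons => hi.
have hi' : i < size (y :: p') by move: hi; rewrite /= minnn.
rewrite nth_zip ?size_rcons // (nth_map x0 _ _ hi').
have hin : nth x0 (y :: p') i \in y :: p' by rewrite mem_nth.
rewrite next_nth hin index_uniq //.
congr pair.
rewrite nth_rcons.
case: ltnP => h1.
  by rewrite (set_nth_default x0).
have -> : i = size p' by apply/eqP; rewrite eqn_leq h1 -ltnS hi'.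
by rewrite eqxx nth_default.
Qed.

Lemma cycle_edges_next p : uniq p ->
  cycle_edges p = [seq [set u; next p u] | u <- p].
Proof. by move=> Up; rewrite /cycle_edges zip_next // -map_comp. Qed.

Lemma mem_cycle_edges p S : uniq p ->
  (S \in cycle_edges p) <-> (exists2 u, u \in p & S = [set u; next p u]).
Proof.
move=> Up; rewrite cycle_edges_next //; split.
  by case/mapP=> u hu ->; exists u.
by case=> u hu ->; apply/mapP; exists u.
Qed.

Lemma next_next_neq p x : uniq p -> 3 <= size p -> x \in p ->
  next p (next p x) != x.
Proof.
move=> Up hs hx.
case: (rot_to hx) => i s hr.
have Ur : uniq (rot i p) by rewrite rot_uniq.
rewrite -!(next_rot i Up) hr.
have : 3 <= size (x :: s) by rewrite -hr size_rot.
move: Ur; rewrite hr.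
case: s {hr} => [|a [|b s]] //= Ux _.
have xa : (a == x) = false.
  by apply/negP => /eqP E; subst; move: Ux; rewrite /= inE eqxx.
have xb : (b == x) = false.
  by apply/negP => /eqP E; subst; move: Ux; rewrite /= !inE eqxx orbT.
by rewrite eqxx xa eqxx xb.
Qed.

Lemma uniq_cycle_edges p : uniq p -> 3 <= size p -> uniq (cycle_edges p).
Proof.
move=> Up hs; rewrite cycle_edges_next //.
rewrite map_inj_in_uniq // => u v hu hv /set2_eq [[]//|[E1 E2]].
have := next_next_neq Up hs hv.
by rewrite -E1 E2 eqxx.
Qed.

Lemma cycle_edges_rot p i S : uniq p ->
  (S \in cycle_edges (rot i p)) = (S \in cycle_edges p).
Proof.
move=> Up; rewrite !cycle_edges_next ?rot_uniq //.
rewrite (eq_map (g := fun u => [set u; next p u])); last first.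
  by move=> u; rewrite next_rot.
by rewrite map_rot mem_rot.
Qed.

Lemma cycle_edges_rev p S : uniq p ->
  (S \in cycle_edges (rev p)) = (S \in cycle_edges p).
Proof.
move=> Up; rewrite !cycle_edges_next ?rev_uniq //.
apply/mapP/mapP => [[u hu ->]|[u hu ->]].
  exists (prev p u); first by rewrite mem_prev -mem_rev.
  by rewrite (next_rev Up) (next_prev Up) setUC.
exists (next p u); first by rewrite mem_rev mem_next.
by rewrite (next_rev Up) (prev_next Up) setUC.
Qed.

End Basic.

Lemma uniq_map_inj (A B : eqType) (c : A -> B) (s : seq A) x y :
  uniq (map c s) -> x \in s -> y \in s -> c x = c y -> x = y.
Proof.
elim: s => [|z s IH] //= /andP[hz hu].
rewrite !inE => /orP[/eqP->|hx] /orP[/eqP->|hy] //.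
- by move=> E; move: hz; rewrite E map_f.
- by move=> E; move: hz; rewrite -E map_f.
- exact: IH.
Qed.

Lemma not_uniq_map (A B : eqType) (c : A -> B) (s : seq A) :
  uniq s -> ~~ uniq (map c s) -> exists x y, [/\ x \in s, y \in s, x != y & c x = c y].
Proof.
move=> Us hn; apply: NNPP => hne; move/negP: hn; apply.
rewrite map_inj_in_uniq; last first.
  move=> x y hx hy E; apply: NNPP => hxy; apply: hne; exists x, y; split=> //.
  by apply/negP => /eqP.
by [].
Qed.

Lemma path_closed (T : eqType) (r : rel T) (P : T -> Prop) x q :
  (forall a b, P a -> r a b -> P b) -> P x -> path r x q -> forall y, y \in q -> P y.
Proof.
move=> step; elim: q x => [|z q IH] x //= hx /andP[hxz hp] y.
rewrite inE => /orP[/eqP->|hy]; first exact: step hx hxz.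
exact: IH (step _ _ hx hxz) hp y hy.
Qed.

Lemma connect_closed_P (T : finType) (r : rel T) (P : T -> Prop) x y :
  (forall a b, P a -> r a b -> P b) -> P x -> connect r x y -> P y.
Proof.
move=> step hx /connectP [q hp ->].
case: (lastP q) hp => [|q' z] // hp.
apply: (path_closed step hx hp); by rewrite last_rcons mem_rcons inE eqxx.
Qed.

Section Graph.
Variables (T : finType) (e : rel T).
Hypotheses (e_sym : symmetric e) (e_irr : irreflexive e).

Lemma edgesP S : reflect (exists x y, e x y /\ S = [set x; y]) (S \in edges e).
Proof.
rewrite inE; apply: (iffP existsP) => [[x /existsP [y /andP[h /eqP ->]]]|[x [y [h ->]]]].
  by exists x, y.
by exists x; apply/existsP; exists y; rewrite h eqxx.
Qed.

Lemma set2_edges x y : e x y -> [set x; y] \in edges e.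
Proof. by move=> h; apply/edgesP; exists x, y. Qed.

Lemma cycle_edges_edges p S : gcycle e p -> S \in cycle_edges p -> S \in edges e.
Proof.
case=> hs Up hc /(mem_cycle_edges _ Up) [u hu ->].
exact/set2_edges/next_cycle.
Qed.

Lemma ep_edges x q S : path e x q -> S \in ep x q -> S \in edges e.
Proof.
elim: q x => [|y q IH] x //= /andP[hxy hp]; rewrite inE => /orP[/eqP->|h].
  exact: set2_edges.
exact: IH hp h.
Qed.

Lemma gcycle_rot p i : gcycle e p -> gcycle e (rot i p).
Proof. by case=> h1 h2 h3; split; rewrite ?size_rot ?rot_uniq ?rot_cycle. Qed.

Lemma gcycle_rev p : gcycle e p -> gcycle e (rev p).
Proof.
case=> h1 h2 h3; split; rewrite ?size_rev ?rev_uniq //.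
rewrite rev_cycle (@eq_cycle _ _ e) // => a b /=; exact: e_sym.
Qed.

End Graph.

Definition good (T : finType) (e : rel T) k (f g : {set T}) :=
  [/\ f \in edges e, g \in edges e, f != g &
   forall S : {set T}, #|S| = k -> exists p, [/\ gcycle e p,
     (forall x, x \in S -> x \in p) &
     ~~ ((f \in cycle_edges p) && (g \in cycle_edges p))]].

Section Crx.
Variables (T : finType) (e : rel T).
Hypotheses (e_sym : symmetric e) (e_irr : irreflexive e).

Definition c0 (s : {set T}) := index s (enum (edges e)).

Lemma c0_inj : {in edges e &, injective c0}.
Proof.
move=> s t hs ht E.
have h1 : forall u, u \in edges e -> nth s (enum (edges e)) (c0 u) = u.
  by move=> u hu; rewrite /c0 nth_index ?mem_enum.
by rewrite -(h1 s hs) E h1.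
Qed.

Lemma rainbow_of c p : gcycle e p -> {in cycle_edges p &, injective c} ->
  rainbow c p.
Proof.
move=> hp hi; rewrite /rainbow map_inj_in_uniq //.
by case: hp => h1 h2 _; apply: uniq_cycle_edges.
Qed.

Lemma crx_le k m : crx_pred e k m -> crx e k <= m.
Proof.
move=> hm; rewrite /crx; case: excluded_middle_informative => h; last first.
  by exfalso; apply: h; exists m.
case: ex_minnP => m' _ hmin; apply: hmin; exact/pdecP.
Qed.

Lemma crx_predP k : (exists m, crx_pred e k m) -> crx_pred e k (crx e k).
Proof.
move=> hex; rewrite /crx; case: excluded_middle_informative => h //.
by case: ex_minnP => m' /pdecP.
Qed.

Lemma crx_spec k : in_F e k ->
  (crx e k = #|edges e| <-> ~ exists f g, good e k f g).
Proof.
move=> hF.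
have c0_ok : crx_pred e k #|edges e|.
  exists c0; split.
    move=> S hS; case: (hF S hS) => p [hp hSp]; exists p; split => //.
    apply: rainbow_of => // s t hs ht; apply: c0_inj.
      exact: cycle_edges_edges hs.
    exact: cycle_edges_edges ht.
  rewrite /num_colours undup_id ?size_map -?cardE //.
  by rewrite map_inj_in_uniq ?enum_uniq // => s t; rewrite !mem_enum; apply: c0_inj.
have hle := crx_le c0_ok.
have hP := crx_predP (ex_intro _ _ c0_ok).
split.
  move=> hE [f [g [hf hg hfg hgood]]].
  pose c1 := fun s => if s == g then c0 f else c0 s.
  have : crx_pred e k (num_colours e c1).
    exists c1; split => // S hS.
    case: (hgood S hS) => p [hp hSp hn]; exists p; split => //.
    apply: rainbow_of => // s t hs ht.
    have hsE := cycle_edges_edges hp hs; have htE := cycle_edges_edges hp ht.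
    rewrite /c1; case: (eqVneq s g) => [Es|ns]; case: (eqVneq t g) => [Et|nt].
    - by subst.
    - subst s; move/(c0_inj hf htE) => Ef; subst t.
      by rewrite hs ht in hn.
    - subst t; move/(c0_inj hsE hf) => Ef; subst s.
      by rewrite hs ht in hn.
    - exact: c0_inj hsE htE.
  move/crx_le; rewrite hE /num_colours => hle2.
  have : ~~ uniq (map c1 (enum (edges e))).
    apply/negP => hu.
    have := uniq_map_inj hu (x := f) (y := g).
    rewrite !mem_enum hf hg => /(_ isT isT).
    rewrite /c1 eqxx (negbTE hfg) => /(_ erefl) /eqP.
    by rewrite (negbTE hfg).
  rewrite -ltn_size_undup size_map -cardE => hlt.
  by move: (leq_ltn_trans hle2 hlt); rewrite ltnn.
move=> hng; apply/eqP; rewrite eqn_leq hle /=.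
rewrite leqNgt; apply/negP => hlt.
case: hP => c [hc hnum].
apply: hng.
have : ~~ uniq (map c (enum (edges e))).
  by rewrite -ltn_size_undup size_map -cardE -/(num_colours e c) hnum.
case/not_uniq_map; first exact: enum_uniq.
move=> f [g [hf hg hfg hcfg]].
rewrite !mem_enum in hf hg; exists f, g; split => //.
move=> S hS; case: (hc S hS) => p [hp hSp hr]; exists p; split => //.
apply/negP => /andP[h1 h2]; move/negP: hfg; apply; apply/eqP.
exact: uniq_map_inj hr h1 h2 hcfg.
Qed.

End Crx.

Lemma uniq_full (T : finType) (h : seq T) x :
  uniq h -> size h = #|T| -> x \in h.
Proof.
move=> Uh hs; apply: contraT => hx.
have U2 : uniq (x :: h) by rewrite /= hx.
by have := max_card (mem (x :: h)); rewrite (card_uniqP U2) /= hs ltnn.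
Qed.

Lemma next_nth_mod (T : eqType) (h : seq T) x0 i : uniq h -> i < size h ->
  next h (nth x0 h i) = nth x0 h (i.+1 %% size h).
Proof.
move=> Uh hi; case: h Uh hi => [|y p'] // Uh hi.
have hin : nth x0 (y :: p') i \in y :: p' by rewrite mem_nth.
rewrite next_nth hin index_uniq //=.
case: (ltnP i (size p')) => h1.
  by rewrite modn_small ?ltnS // (set_nth_default x0).
have -> : i = size p' by apply/eqP; rewrite eqn_leq h1 -ltnS hi.
by rewrite modnn nth_default.
Qed.

Definition hnc (T : finType) (e : rel T) (h : seq T) :=
  [/\ gcycle e h, size h = #|T| & forall S, S \in edges e -> S \in cycle_edges h].

Section CycleGraph.
Variables (T : finType) (e : rel T).
Hypotheses (e_sym : symmetric e) (e_irr : irreflexive e).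

Lemma next_prev_neq (p : seq T) x : uniq p -> 3 <= size p -> x \in p -> next p x != prev p x.
Proof.
move=> Up hs hx; apply/eqP => E.
have hpx : prev p x \in p by rewrite mem_prev.
have := next_next_neq Up hs hpx.
by rewrite (next_prev Up) E eqxx.
Qed.

Lemma hnc_nbr h x y : hnc e h -> e x y -> y = next h x \/ x = next h y.
Proof.
case=> [[hs Uh hc] hsz hE] hxy.
have := hE _ (set2_edges hxy).
case/(mem_cycle_edges _ Uh) => u hu /set2_eq [[-> ->]|[-> ->]]; by [left|right].
Qed.

Lemma hnc_cyc h p : hnc e h -> gcycle e p ->
  forall S, S \in edges e -> S \in cycle_edges p.
Proof.
move=> H hp; have [[hs Uh hc] hsz hE] := H; have [ps Up pc] := hp.
have allh : forall x, x \in h by move=> x; exact: uniq_full.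
have claim : forall x, x \in p ->
    [/\ next h x \in p, prev h x \in p & [set x; next h x] \in cycle_edges p].
  move=> x hx.
  have ea : e x (next p x) by apply: next_cycle.
  have eb : e (prev p x) x by apply: prev_cycle.
  have nab := next_prev_neq Up ps hx.
  have nh := next_prev_neq Uh hs (allh x).
  have hna : next p x = next h x \/ next p x = prev h x.
    case: (hnc_nbr H ea) => [->|E]; first by left.
    by right; rewrite [in RHS]E (prev_next Uh).
  have hnb : prev p x = next h x \/ prev p x = prev h x.
    case: (hnc_nbr H eb) => [E|->]; last by left.
    by right; rewrite [in RHS]E (prev_next Uh).
  have hma : next p x \in p by rewrite mem_next.
  have hmb : prev p x \in p by rewrite mem_prev.
  have edge_a : [set x; next p x] \in cycle_edges p.
    by apply/(mem_cycle_edges _ Up); exists x.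
  have edge_b : [set x; prev p x] \in cycle_edges p.
    apply/(mem_cycle_edges _ Up); exists (prev p x) => //.
    by rewrite (next_prev Up) setUC.
  case: hna => Ea; case: hnb => Eb.
  - by move: nab; rewrite Ea Eb eqxx.
  - by rewrite -Ea -Eb.
  - by rewrite -Ea -Eb.
  - by move: nab; rewrite Ea Eb eqxx.
have x0 : T by case: h hs {hE allh claim H hc Uh hsz} => [|y] //.
have [z hz] : exists z, z \in p.
  by case: p ps {hp Up pc claim} => [|z p'] // _; exists z; rewrite inE eqxx.
set i0 := index z h.
have hi0 : i0 < size h by rewrite index_mem.
have up : forall d, i0 + d < size h -> nth x0 h (i0 + d) \in p.
  elim=> [|d IH] hd; first by rewrite addn0 nth_index.
  have hd' : i0 + d < size h by apply: ltn_trans hd; rewrite addnS.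
  have hd2 : (i0 + d).+1 < size h by rewrite -addnS.
  rewrite addnS -(modn_small hd2) -next_nth_mod //.
  by case: (claim _ (IH hd')).
have down : forall d, d <= i0 -> nth x0 h (i0 - d) \in p.
  elim=> [|d IH] hd; first by rewrite subn0 nth_index.
  have hd' : d <= i0 by apply: ltnW.
  have hlt : i0 - d.+1 < size h by apply: leq_ltn_trans hi0; apply: leq_subr.
  have E : next h (nth x0 h (i0 - d.+1)) = nth x0 h (i0 - d).
    have E1 : (i0 - d.+1).+1 = i0 - d by rewrite subnS prednK // subn_gt0.
    rewrite next_nth_mod // E1 modn_small //.
    exact: leq_ltn_trans (leq_subr _ _) hi0.
  have := claim _ (IH hd'); rewrite -E (prev_next Uh).
  by case.
have allp : forall x, x \in p.
  move=> x; have hx : index x h < size h by rewrite index_mem.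
  rewrite -(nth_index x0 (allh x)).
  case: (leqP i0 (index x h)) => hle.
    by rewrite -(subnKC hle); apply: up; rewrite subnKC.
  have -> : index x h = i0 - (i0 - index x h) by rewrite subKn // ltnW.
  by apply: down; apply: leq_subr.
move=> S /hE /(mem_cycle_edges _ Uh) [u hu ->].
by case: (claim u (allp u)).
Qed.

Lemma hnc_is_cycle h : hnc e h -> is_cycle_graph e.
Proof.
move=> H; have [[hs Uh hc] hsz hE] := H.
have x0 : T by case: h hs {hE H hc Uh hsz} => [|y] //.
pose f := fun i : 'I_#|T| => nth x0 h i.
have nth_inj : forall i j : nat, i < size h -> j < size h ->
    nth x0 h i = nth x0 h j -> i = j.
  by move=> i j hi hj /eqP; rewrite nth_uniq // => /eqP.
have fnext : forall i : 'I_#|T|, next h (f i) = nth x0 h (i.+1 %% #|T|).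
  by move=> i; rewrite /f next_nth_mod ?hsz.
have hmod : forall i : 'I_#|T|, i.+1 %% #|T| < size h.
  by move=> i; rewrite hsz ltn_mod; apply: leq_ltn_trans (ltn_ord i).
exists f; split.
  apply: inj_card_bij; last by rewrite card_ord.
  by move=> i j /nth_inj E; apply/val_inj/E; rewrite hsz.
move=> i j; rewrite /cycle_rel; apply/idP/idP.
  move=> hij; case: (hnc_nbr H hij) => E.
    rewrite fnext in E; apply/orP; left; apply/eqP.
    by apply: (nth_inj _ _ _ (hmod i) E); rewrite hsz.
  rewrite fnext in E; apply/orP; right; apply/eqP.
  by apply: (nth_inj _ _ _ (hmod j) E); rewrite hsz.
have fin : forall k : 'I_#|T|, f k \in h by move=> k; rewrite mem_nth ?hsz.
case/orP=> /eqP E.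
  have -> : f j = next h (f i) by rewrite fnext /f E.
  exact: next_cycle.
rewrite e_sym.
have -> : f i = next h (f j) by rewrite fnext /f E.
exact: next_cycle.
Qed.

Lemma is_cycle_hnc : 3 <= #|T| -> is_cycle_graph e -> exists h, hnc e h.
Proof.
move=> hn [f [fbij fe]].
have finj := bij_inj fbij.
case: (fbij) => g fg gf.
pose h := [seq f i | i <- enum 'I_#|T|].
have Uh : uniq h by rewrite map_inj_uniq ?enum_uniq.
have hsz : size h = #|T| by rewrite size_map size_enum_ord.
have hnth : forall i : 'I_#|T|, forall x0, nth x0 h i = f i.
  move=> i x0; rewrite (nth_map i) ?size_enum_ord //.
  by rewrite nth_ord_enum.
have fin : forall i, f i \in h by move=> i; rewrite map_f ?mem_enum.
have fnext : forall i : 'I_#|T|, next h (f i) = f (Ordinal (ltn_pmod i.+1 (leq_ltn_trans (leq0n _) (ltn_ord i)))).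
  move=> i; set k := Ordinal _.
  by rewrite -[in LHS](hnth i (f i)) next_nth_mod ?hsz // -(hnth k (f i)).
have fe1 : forall i, e (f i) (next h (f i)).
  move=> i; rewrite fnext fe /cycle_rel /= eqxx //.
exists h; split => //.
  split; rewrite ?hsz //.
  by apply: cycle_from_next => // x /mapP [i _ ->].
move=> S /(edgesP) [x [y [hxy ->]]].
rewrite -(gf x) -(gf y) in hxy *.
move: hxy; rewrite fe /cycle_rel => /orP[] /eqP E; apply/(mem_cycle_edges _ Uh).
  exists (f (g x)) => //; congr [set _; _]; rewrite fnext; congr f.
  by apply: val_inj; rewrite /= E.
exists (f (g y)) => //; rewrite setUC; congr [set _; _]; rewrite fnext; congr f.
by apply: val_inj; rewrite /= E.
Qed.

End CycleGraph.

Lemma exists_card (T : finType) k : k <= #|T| -> exists S : {set T}, #|S| = k.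
Proof.
move=> hk; exists [set x in take k (enum T)].
rewrite cardsE (card_uniqP _) ?take_uniq ?enum_uniq // size_takel //.
by rewrite -cardE.
Qed.

Section PartC.
Variables (T : finType) (e : rel T).
Hypotheses (e_sym : symmetric e) (e_irr : irreflexive e).

Lemma cyc_nogood k :
  (forall p, gcycle e p -> forall S, S \in edges e -> S \in cycle_edges p) ->
  k <= #|T| -> ~ exists f g, good e k f g.
Proof.
move=> hc hk [f [g [hf hg hfg hgood]]].
case: (exists_card hk) => S hS.
case: (hgood S hS) => p [hp _ hn].
by rewrite !hc in hn.
Qed.

Lemma first_edge p : gcycle e p -> exists f, f \in cycle_edges p.
Proof.
case=> hs Up hc; case: p hs Up hc => [|x p] // hs Up hc.
exists [set x; next (x :: p) x]; apply/(mem_cycle_edges _ Up).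
by exists x; rewrite ?inE ?eqxx.
Qed.

Lemma part_c k : hamiltonian e -> 1 <= k <= #|T| ->
  (crx e k = #|edges e| <-> is_cycle_graph e).
Proof.
move=> [h [hh hsz]] /andP[k1 kn].
have [hs Uh hc] := hh.
have allh : forall x, x \in h by move=> x; exact: uniq_full.
have hF : in_F e k by move=> S _; exists h; split.
rewrite (crx_spec hF); split.
  move=> hng; apply: (hnc_is_cycle e_sym (h := h)); split => // S hS.
  apply: NNPP => hSn; apply: hng.
  case: (first_edge hh) => f hf.
  exists f, S; split => //.
  - exact: cycle_edges_edges hh hf.
  - by apply/negP => /eqP E; apply: hSn; rewrite -E.
  - move=> S' _; exists h; split => //.
    by apply/negP => /andP[_ ?].
move=> hcg.
have n3 : 3 <= #|T| by rewrite -hsz.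
case: (is_cycle_hnc n3 hcg) => h' hh'.
apply: cyc_nogood => // p hp; exact: hnc_cyc hh' hp.
Qed.
End PartC.

Lemma ep_off (T : finType) (P : pred T) y L z S :
  L != [::] -> all (predC P) L -> S \in ep y (rcons L z) ->
  exists2 w, w \in S & ~~ P w.
Proof.
move=> hL hall; rewrite ep_rcons mem_rcons inE => /orP[/eqP ->|].
  exists (last y L); first by rewrite !inE eqxx.
  case: L hL hall => [|a L] // _ /allP; apply; rewrite /=; exact: mem_last.
case/mem_ep => u [v [-> _ hv]]; exists v; first by rewrite !inE eqxx orbT.
by move/allP: hall => /(_ v hv).
Qed.

Lemma uniq_dup (T : eqType) (a b c : seq T) y : uniq (a ++ y :: b ++ y :: c) = false.
Proof. by rewrite cat_uniq /= mem_cat inE eqxx orbT /= !andbF. Qed.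

Lemma split_first (T : eqType) (P : pred T) d : has P d ->
  exists r1 t d1, [/\ d = r1 ++ t :: d1, P t & all (predC P) r1].
Proof.
elim: d => [|y d IH] //= /orP[hy|hd]; first by exists [::], y, d.
case: (boolP (P y)) => hy; first by exists [::], y, d.
case: (IH hd) => r1 [t [d1 [-> ht hall]]].
by exists (y :: r1), t, d1; rewrite /= hy hall.
Qed.

Lemma split_last (T : eqType) (P : pred T) d : has P d ->
  exists m s r2, [/\ d = m ++ s :: r2, P s & all (predC P) r2].
Proof.
move=> hd; have : has P (rev d) by rewrite has_rev.
case/split_first => r1 [t [d1 [Ed ht hall]]].
exists (rev d1), t, (rev r1); split => //; last by rewrite all_rev.
by rewrite -(revK d) Ed rev_cat rev_cons cat_rcons.
Qed.

Section AV.
Variables (T : finType) (e : rel T).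
Hypotheses (e_sym : symmetric e) (e_irr : irreflexive e).

Lemma path_rev_sym a q b : path e a (rcons q b) -> path e b (rcons (rev q) a).
Proof.
move=> hp.
have := rev_path e a (rcons q b).
rewrite last_rcons belast_rcons rev_cons => ->.
by rewrite (@eq_path _ _ e) // => u v /=; rewrite e_sym.
Qed.

Lemma ce_split (s : T) c1 t c2 :
  cycle_edges (s :: c1 ++ t :: c2) = ep s (c1 ++ [:: t]) ++ ep t (rcons c2 s).
Proof. by rewrite cycle_edges_cons rcons_cat !ep_cat /= -catA. Qed.

Lemma AV_core s c1 t c2 q x f :
  gcycle e (s :: c1 ++ t :: c2) -> f \in cycle_edges (s :: c1 ++ t :: c2) ->
  (forall w, w \in f -> w \in s :: c1 ++ t :: c2) ->
  path e s (rcons q t) -> uniq q -> all (fun w => w \notin s :: c1 ++ t :: c2) q ->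
  x \in q -> exists D, [/\ gcycle e D, x \in D & f \notin cycle_edges D].
Proof.
set C := s :: c1 ++ t :: c2.
move=> [hs UC cC] hf fC hq Uq offq hx.
have qn : q != [::] by case: q hx {hq Uq offq}.
have ceC : cycle_edges C = ep s (c1 ++ [:: t]) ++ ep t (rcons c2 s).
  exact: ce_split.
have pC : path e s (c1 ++ [:: t]) && path e t (rcons c2 s).
  by move: cC; rewrite /C /= rcons_cat !cat_path /= andbT andbA.
case/andP: pC => pC1 pC2.
have offq' : all (predC (mem C)) q.
  by apply/allP => w /(allP offq).
have offrq : all (predC (mem C)) (rev q) by rewrite all_rev.
have rqn : rev q != [::] by rewrite -size_eq0 size_rev size_eq0.
have notC : forall w, w \in q -> w \notin C by move=> w /(allP offq).
have sC : s \in C by rewrite inE eqxx.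
have tC : t \in C by rewrite /C !(inE, mem_cat) eqxx !orbT.
have UC1 : uniq (s :: c1 ++ [:: t]).
  have E : C = (s :: c1 ++ [:: t]) ++ c2 by rewrite /C /= -catA.
  by move: UC; rewrite E cat_uniq => /andP[].
have UC2 : uniq (t :: c2 ++ [:: s]).
  have : uniq (rot (size c1).+1 C) by rewrite rot_uniq.
  have E : C = (s :: c1) ++ (t :: c2) by [].
  have E2 : (size c1).+1 = size (s :: c1) by [].
  rewrite E E2 rot_size_cat.
  have E3 : (t :: c2) ++ s :: c1 = (t :: c2 ++ [:: s]) ++ c1 by rewrite /= -catA.
  by rewrite E3 cat_uniq => /andP[].
have fE1 : f \in cycle_edges (s :: c1 ++ t :: rev q) -> f \in ep s (c1 ++ [:: t]).
  rewrite ce_split mem_cat => /orP[] // /(ep_off rqn offrq) [w hw hwn].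
  by move: hwn; rewrite /= fC.
have fE2 : f \in cycle_edges (t :: c2 ++ s :: q) -> f \in ep t (rcons c2 s).
  rewrite ce_split mem_cat cats1 => /orP[] // /(ep_off qn offq') [w hw hwn].
  by move: hwn; rewrite /= fC.
have Uce : uniq (cycle_edges C) by apply: uniq_cycle_edges.
have hx' : x \in rev q by rewrite mem_rev.
have dis1 : forall w, w \in rev q -> w \notin s :: c1 ++ [:: t].
  move=> w; rewrite mem_rev => /notC; apply: contra.
  by rewrite /C !(inE, mem_cat) => /orP[->|/orP[->|->]]; rewrite ?orbT.
have dis2 : forall w, w \in q -> w \notin t :: c2 ++ [:: s].
  move=> w /notC; apply: contra.
  by rewrite /C !(inE, mem_cat) => /orP[->|/orP[->|->]]; rewrite ?orbT.
case: (boolP (f \in cycle_edges (s :: c1 ++ t :: rev q))) => h1; last first.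
  exists (s :: c1 ++ t :: rev q); split => //.
  - split.
    + have sq : 0 < size q by rewrite lt0n size_eq0.
      by rewrite /= size_cat /= size_rev addnS !ltnS (leq_trans sq) // leq_addl.
    + have -> : s :: c1 ++ t :: rev q = (s :: c1 ++ [:: t]) ++ rev q.
        by rewrite /= -catA.
      rewrite cat_uniq UC1 rev_uniq Uq andbT.
      by apply/hasPn => w /dis1.
    + rewrite /=.
      have -> : rcons (c1 ++ t :: rev q) s = (c1 ++ [:: t]) ++ rcons (rev q) s.
        by rewrite rcons_cat -catA.
      rewrite cat_path pC1 last_cat /=; exact: path_rev_sym.
  - by rewrite !(inE, mem_cat) hx' !orbT.
exists (t :: c2 ++ s :: q); split => //.
- split.
  + have sq : 0 < size q by rewrite lt0n size_eq0.
    by rewrite /= size_cat /= addnS !ltnS (leq_trans sq) // leq_addl.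
  + have -> : t :: c2 ++ s :: q = (t :: c2 ++ [:: s]) ++ q by rewrite /= -catA.
    rewrite cat_uniq UC2 Uq andbT.
    by apply/hasPn => w /dis2.
  + rewrite /=.
    have -> : rcons (c2 ++ s :: q) t = (c2 ++ [:: s]) ++ rcons q t.
      by rewrite rcons_cat -catA.
    by rewrite cat_path cats1 pC2 last_rcons.
- by rewrite !(inE, mem_cat) hx !orbT.
apply/negP => /fE2 h2.
move: Uce; rewrite ceC cat_uniq => /and3P[_ /hasPn hn _].
by move: (hn _ h2); rewrite (fE1 h1).
Qed.

Lemma avoid_edge C D x f : gcycle e C -> f \in cycle_edges C -> gcycle e D ->
  x \in D -> x \notin C ->
  exists D', [/\ gcycle e D', x \in D' & f \notin cycle_edges D'].
Proof.
move=> hC hf hD hxD hxC.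
case: (boolP (f \in cycle_edges D)) => hfD; last by exists D.
have [Cs UC cC] := hC; have [Ds UD cD] := hD.
case/(mem_cycle_edges _ UC): (hf) => a ha Ef.
set b := next C a in Ef.
have hb : b \in C by rewrite mem_next.
have ab : a != b.
  by apply/eqP => E; have := next_cycle cC ha; rewrite -/b -E e_irr.
have fD : forall w, w \in f -> w \in D.
  move=> w hw; case/(mem_cycle_edges _ UD): hfD => u hu Eu.
  by move: hw; rewrite Eu !inE => /orP[] /eqP ->; rewrite ?mem_next.
have fC : forall w, w \in f -> w \in C.
  by move=> w; rewrite Ef !inE => /orP[] /eqP ->.
case: (rot_to hxD) => i d hrot.
have hD1 : gcycle e (x :: d) by rewrite -hrot; apply: gcycle_rot.
have inD1 : forall w, (w \in x :: d) = (w \in D) by move=> w; rewrite -hrot mem_rot.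
have ad : a \in d.
  have : a \in x :: d by rewrite inD1 fD // Ef !inE eqxx.
  by rewrite inE => /orP[/eqP E|//]; move: hxC; rewrite -E ha.
have bd : b \in d.
  have : b \in x :: d by rewrite inD1 fD // Ef !inE eqxx orbT.
  by rewrite inE => /orP[/eqP E|//]; move: hxC; rewrite -E hb.
have hasd : has (mem C) d by apply/hasP; exists a.
case: (split_first hasd) => r1 [t [d1 [Ed tC offr1]]].
have hasd1 : has (mem C) d1.
  have nr1 : forall w, w \in C -> w \in d -> w = t \/ w \in d1.
    move=> w wC; rewrite Ed mem_cat inE => /or3P[hw|/eqP->|]; [|by left|by right].
    by move/allP: offr1 => /(_ w hw); rewrite /= wC.
  case: (nr1 a ha ad) => [Ea|]; last by move=> h; apply/hasP; exists a.
  case: (nr1 b hb bd) => [Eb|]; last by move=> h; apply/hasP; exists b.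
  by move: ab; rewrite Ea Eb eqxx.
case: (split_last hasd1) => m [s' [r2 [Ed1 sC offr2]]].
subst d d1.
set q := r2 ++ x :: r1.
have [_ UD1 cD1] := hD1.
have UR : uniq (s' :: (r2 ++ x :: r1) ++ t :: m).
  have : uniq ((s' :: r2) ++ (x :: r1 ++ t :: m)).
    by rewrite uniq_catC /= -!catA.
  by rewrite /= -catA.
have Uq : uniq q.
  by move: UR; rewrite cons_uniq cat_uniq => /andP[_ /and3P[]].
have hq : path e s' (rcons q t).
  have : cycle e ((s' :: r2) ++ (x :: r1 ++ t :: m)).
    by rewrite cycle_catC /= -!catA.
  rewrite /= rcons_cat /= rcons_cat /=.
  have -> : r2 ++ x :: r1 ++ t :: rcons m s' = rcons q t ++ rcons m s'.
    by rewrite /q -!cats1 -!catA.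
  by rewrite cat_path => /andP[].
have offq : all (fun w => w \notin C) q.
  rewrite /q all_cat /= hxC /=.
  apply/andP; split.
    by apply/allP => w /(allP offr2).
  by apply/allP => w /(allP offr1).
have sC' : s' \in C := sC.
case: (rot_to sC') => j c hrotC.
have hC1 : gcycle e (s' :: c) by rewrite -hrotC; apply: gcycle_rot.
have inC1 : forall w, (w \in s' :: c) = (w \in C) by move=> w; rewrite -hrotC mem_rot.
have st : t != s'.
  apply/eqP => E; move: UD1; rewrite /= => /andP[_].
  by rewrite E uniq_dup.
have tc : t \in c.
  have tC' : t \in C := tC.
  by move: tC'; rewrite -inC1 inE (negbTE st).
case/splitPr: tc hC1 inC1 hrotC => c1 c2 hC1 inC1 hrotC.
apply: (AV_core hC1 _ _ hq Uq _ _).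
- by rewrite -hrotC cycle_edges_rot.
- by move=> w /fC; rewrite inC1.
- by apply/allP => w /(allP offq); rewrite inC1.
- by rewrite /q mem_cat inE eqxx orbT.
Qed.

End AV.

Section PartA.
Variables (T : finType) (e : rel T).
Hypotheses (e_sym : symmetric e) (e_irr : irreflexive e).

Lemma part_a : 3 <= #|T| -> (forall v : T, exists p, gcycle e p /\ v \in p) ->
  (crx e 1 = #|edges e| <-> is_cycle_graph e).
Proof.
move=> n3 hyp.
have hF : in_F e 1.
  move=> S /eqP /cards1P [x ->]; case: (hyp x) => p [hp hx].
  by exists p; split => // y; rewrite inE => /eqP ->.
rewrite (crx_spec hF); split; last first.
  move=> hcg; case: (is_cycle_hnc n3 hcg) => h hh.
  apply: cyc_nogood; last by apply: leq_trans n3.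
  by move=> p hp; apply: hnc_cyc hh hp.
move=> hng.
have [x0 _] : exists x : T, true.
  by move: n3; rewrite cardE; case: (enum T) => [|y] //; exists y.
case: (hyp x0) => C [hC _]; have [Cs UC cC] := hC.
case: (classic (forall S, S \in edges e -> S \in cycle_edges C)) => allC.
  apply: (hnc_is_cycle e_sym (h := C)); split => //.
  have allx : forall x, x \in C.
    move=> x; case: (hyp x) => D [hD hxD]; have [_ UD _] := hD.
    have : [set x; next D x] \in cycle_edges C.
      apply: allC; apply: (cycle_edges_edges hD).
      by apply/(mem_cycle_edges _ UD); exists x.
    case/(mem_cycle_edges _ UC) => u hu /set2_eq [[-> _]|[-> _]] //.
    by rewrite mem_next.
  rewrite -(card_uniqP UC) [RHS]cardE; apply: eq_cardT => x.
  by rewrite allx.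
have [g [hg hgC]] : exists g, g \in edges e /\ g \notin cycle_edges C.
  apply: NNPP => hne; apply: allC => S hS; apply: NNPP => hSn; apply: hne.
  by exists S; split => //; apply/negP.
case: (first_edge hC) => f hf.
exfalso; apply: hng; exists f, g; split => //.
- exact: cycle_edges_edges hC hf.
- by apply/negP => /eqP E; move: hgC; rewrite -E hf.
move=> S /eqP /cards1P [x ->].
case: (boolP (x \in C)) => hxC.
  exists C; split => //; first by move=> y; rewrite inE => /eqP ->.
  by rewrite (negbTE hgC) andbF.
case: (hyp x) => D [hD hxD].
case: (avoid_edge e_sym e_irr hC hf hD hxD hxC) => D' [hD' hx' hf'].
exists D'; split => //; first by move=> y; rewrite inE => /eqP ->.
by rewrite (negbTE hf').
Qed.

End PartA.

Lemma splitE (T : eqType) (x : T) p : x \in p -> exists p1 p2, p = p1 ++ x :: p2.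
Proof. by case/splitPr => p1 p2; exists p1, p2. Qed.

Section Whitney.
Variables (T : finType) (e : rel T).
Hypotheses (e_sym : symmetric e) (e_irr : irreflexive e).

Definition rel_on (A : {set T}) := [rel u v | [&& e u v, u \in A & v \in A]].

Lemma path_rel_on A x p : path (rel_on A) x p -> path e x p /\ all (mem A) p.
Proof.
elim: p x => [|y p IH] x //= /andP[/and3P[hxy _ hy] hp].
by case: (IH _ hp) => h1 h2; rewrite hxy h1 hy h2.
Qed.

Lemma third_vertex (u v : T) : 3 <= #|T| -> exists z, z != u /\ z != v.
Proof.
move=> n3; case: (pickP (predC (mem [set u; v]))) => [z|hn].
  by rewrite /= !inE negb_or => /andP[h1 h2]; exists z.
have : #|[set: T]| <= #|[set u; v]|.
  by apply: subset_leq_card; apply/subsetP => x _; move: (hn x) => /= /negbFE.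
rewrite cardsT cards2 => h; exfalso; move: h n3; case: (u != v) => /=; lia.
Qed.

Lemma edge_cycle u v : two_connected e -> e u v ->
  exists p, [/\ gcycle e p, u \in p & v \in p].
Proof.
move=> [n3 hc hcv] huv.
have uv : u != v by apply/eqP => E; move: huv; rewrite E e_irr.
case: (third_vertex u v n3) => z [zu zv].
set del := del_edge e [set u; v].
have del_sym : symmetric del.
  by move=> a b; rewrite /del /del_edge /= e_sym setUC.
have sub_u : forall a b, rel_on (~: [set u]) a b -> connect del a b.
  move=> a b /and3P[hab ha hb]; apply: connect1; rewrite /del /del_edge /= hab /=.
  apply/eqP => E; have : u \in [set a; b] by rewrite E !inE eqxx.
  by rewrite !inE => /orP[] /eqP E2; [move: ha|move: hb]; rewrite -E2 !inE eqxx.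
have sub_v : forall a b, rel_on (~: [set v]) a b -> connect del a b.
  move=> a b /and3P[hab ha hb]; apply: connect1; rewrite /del /del_edge /= hab /=.
  apply/eqP => E; have : v \in [set a; b] by rewrite E !inE eqxx orbT.
  by rewrite !inE => /orP[] /eqP E2; [move: ha|move: hb]; rewrite -E2 !inE eqxx.
have c1 : connect del z v.
  apply: (connect_sub sub_u); apply: hcv; by rewrite !inE ?zu // eq_sym.
have c2 : connect del z u.
  apply: (connect_sub sub_v); apply: hcv; by rewrite !inE ?zv // eq_sym.
have : connect del v u.
  apply: connect_trans c2; by rewrite (sym_connect_sym del_sym).
case/connectP => p hp hl.
move: hl; case: (shortenP hp) => p' hp' Up' _ hl'.
have pn : p' != [::] by case: p' hl' {hp' Up'} => //= E; move: uv; rewrite E eqxx.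
have pu : p' != [:: u].
  apply/eqP => E; move: hp'; rewrite E /= andbT /del /del_edge /= setUC eqxx andbF.
  by [].
exists (v :: p'); split; last by rewrite inE eqxx.
- split => //.
    case: p' pn pu hl' {hp' Up'} => [|a [|b p']] //= _ hpu hla.
    by move: hpu; rewrite -hla eqxx.
  rewrite /= rcons_path -hl' huv andbT.
  by apply: (sub_path _ hp') => a b /andP[].
- by rewrite hl' mem_last.
Qed.

Lemma W_core w c1 z c2 r1 v u :
  gcycle e (w :: c1 ++ z :: c2) -> u \in c1 ++ [:: z] ->
  v \notin w :: c1 ++ z :: c2 ->
  all (fun y => y \notin w :: c1 ++ z :: c2) r1 ->
  path e v (rcons r1 z) -> uniq (v :: rcons r1 z) -> e w v ->
  exists p, [/\ gcycle e p, u \in p & v \in p].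
Proof.
set C := w :: c1 ++ z :: c2.
move=> [hs UC cC] hu hv offr hp Ur hwv.
have sub : forall y, y \notin C -> y \notin w :: c1 ++ [:: z].
  move=> y; apply: contra; rewrite /C !(inE, mem_cat).
  by case/orP=> [->|/orP[->|->]]; rewrite ?orbT.
have UC1 : uniq (w :: c1 ++ [:: z]).
  have E : C = (w :: c1 ++ [:: z]) ++ c2 by rewrite /C /= -catA.
  by move: UC; rewrite E cat_uniq => /andP[].
have pC1 : path e w (c1 ++ [:: z]).
  by move: cC; rewrite /C /= rcons_cat !cat_path /= andbT => /and3P[-> -> _].
move: Ur; rewrite /= mem_rcons inE negb_or rcons_uniq => /andP[/andP[vz vr1] /andP[zr1 Ur1]].
exists (w :: c1 ++ z :: rcons (rev r1) v); split.
- split.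
  + by rewrite /= size_cat /= size_rcons size_rev !addnS.
  + have -> : w :: c1 ++ z :: rcons (rev r1) v = (w :: c1 ++ [:: z]) ++ rcons (rev r1) v.
      by rewrite /= -catA.
    rewrite cat_uniq UC1 rcons_uniq mem_rev vr1 rev_uniq Ur1 !andbT /=.
    apply/hasPn => y; rewrite mem_rcons inE mem_rev => /orP[/eqP ->|hy].
      exact: sub.
    by apply: sub; apply: (allP offr).
  + rewrite /=.
    have -> : rcons (c1 ++ z :: rcons (rev r1) v) w =
              (c1 ++ [:: z]) ++ rcons (rcons (rev r1) v) w.
      by rewrite rcons_cat -catA.
    rewrite cat_path pC1 last_cat /= rcons_path (path_rev_sym e_sym hp) /=.
    by rewrite last_rcons e_sym.
- by move: hu; rewrite !(inE, mem_cat) => /orP[] ->; rewrite ?orbT.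
- by rewrite !(inE, mem_cat, mem_rcons) eqxx !orbT.
Qed.

Lemma gcycle_rev_tail w c : gcycle e (w :: c) -> gcycle e (w :: rev c).
Proof.
move=> h; have := gcycle_rot (size c) (gcycle_rev e_sym h).
by rewrite rev_cons -cats1 -(size_rev c) rot_size_cat.
Qed.

Lemma W_step u w v C : two_connected e -> w != u -> gcycle e C ->
  u \in C -> w \in C -> e w v -> v \notin C ->
  exists p, [/\ gcycle e p, u \in p & v \in p].
Proof.
move=> [n3 hc hcv] wu hC uC wC hwv vC.
have vw : v != w by apply/eqP => E; move: hwv; rewrite E e_irr.
have uv : u != v by apply/eqP => E; move: vC; rewrite -E uC.
have : connect (rel_on (~: [set w])) v u.
  by apply: hcv; rewrite !inE ?vw // eq_sym.
case/connectP => p hp hl.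
move: hl; case: (shortenP hp) => p' hp' Up' _ hl'.
case: (path_rel_on hp') => hpe hall.
have up' : u \in p'.
  have : u \in v :: p' by rewrite hl' mem_last.
  by rewrite inE (negbTE uv).
have hasC : has (mem C) p' by apply/hasP; exists u.
case: (split_first hasC) => r1 [z [r' [Ep zC offr1]]].
subst p'.
have hpz : path e v (rcons r1 z).
  by move: hpe; rewrite cat_path rcons_path /= => /and3P[-> -> _].
have Urz : uniq (v :: rcons r1 z).
  by move: Up'; rewrite -cat_cons -cat_rcons cat_uniq => /andP[].
have zw : z != w.
  have : z \in mem (~: [set w]) by apply: (allP hall); rewrite mem_cat inE eqxx orbT.
  by rewrite /= !inE.
case: (rot_to wC) => i c hrot.
have hC1 : gcycle e (w :: c) by rewrite -hrot; apply: gcycle_rot.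
have inC1 : forall y, (y \in w :: c) = (y \in C) by move=> y; rewrite -hrot mem_rot.
have uc : u \in c by move: uC; rewrite -inC1 inE eq_sym (negbTE wu).
have zC' : z \in C := zC.
have zc : z \in c by move: zC'; rewrite -inC1 inE (negbTE zw).
have vC1 : v \notin w :: c by rewrite inC1.
have offr1' : all (fun y => y \notin w :: c) r1.
  by apply/allP => y /(allP offr1); rewrite /= inC1.
clear hrot inC1.
case/splitPr: uc hC1 zc vC1 offr1' => a b hC1 zc vC1 offr1'.
case: (boolP (z \in u :: b)) => zb.
  case: (splitE zb) => b1 [b2 E].
  have Ec : w :: a ++ u :: b = w :: (a ++ b1) ++ z :: b2 by rewrite E catA.
  rewrite Ec in hC1 vC1 offr1'.
  apply: (W_core hC1 _ vC1 offr1' hpz Urz hwv).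
  have : u \in b1 ++ [:: z].
    by move: E; case: (b1) => [|y l] /= [-> _]; rewrite !inE eqxx ?orbT.
  by move=> hu'; rewrite -catA mem_cat hu' orbT.
have za : z \in rev a.
  by move: zc; rewrite mem_rev mem_cat (negbTE zb) orbF.
have hC2 := gcycle_rev_tail hC1.
have Erev : rev (a ++ u :: b) = rev b ++ u :: rev a.
  by rewrite rev_cat rev_cons cat_rcons.
rewrite Erev in hC2.
have memE : forall y, (y \in w :: rev b ++ u :: rev a) = (y \in w :: a ++ u :: b).
  by move=> y; rewrite -Erev !inE mem_rev.
have vC2 : v \notin w :: rev b ++ u :: rev a by rewrite memE.
have offr2 : all (fun y => y \notin w :: rev b ++ u :: rev a) r1.
  by apply/allP => y /(allP offr1'); rewrite /= memE.
case/splitPr: za hC2 vC2 offr2 => a1 a2 hC2 vC2 offr2.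
have Ec : w :: rev b ++ u :: a1 ++ z :: a2 = w :: (rev b ++ u :: a1) ++ z :: a2.
  by rewrite -catA.
rewrite Ec in hC2 vC2 offr2.
apply: (W_core hC2 _ vC2 offr2 hpz Urz hwv).
by rewrite !(mem_cat, inE) eqxx !orbT.
Qed.

Lemma whitney u v : two_connected e -> u != v ->
  exists p, [/\ gcycle e p, u \in p & v \in p].
Proof.
move=> H uv; have [n3 hc _] := H.
pose P y := y = u \/ exists p, [/\ gcycle e p, u \in p & y \in p].
have : connect e u v.
  apply: (connect_sub (e := rel_on setT)); last by apply: hc; rewrite inE.
  by move=> a b /and3P[h _ _]; apply: connect1.
move=> hconn.
have step : forall a b, P a -> e a b -> P b.
  move=> a b [->|[C [hC uC aC]]] hab.
    case: (eqVneq b u) => [->|bu]; first by left.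
    by right; apply: edge_cycle.
  case: (eqVneq b u) => [->|bu]; first by left.
  case: (boolP (b \in C)) => bC; first by right; exists C.
  case: (eqVneq a u) => [E|au]; first by subst a; right; apply: edge_cycle.
  by right; apply: (W_step H au hC uC aC hab bC).
case: (connect_closed_P step (or_introl erefl) hconn) => // E.
by move: uv; rewrite E eqxx.
Qed.

Lemma in_F2 : two_connected e -> in_F e 2.
Proof.
move=> H S /eqP /cards2P [x [y [xy ->]]].
case: (whitney H xy) => p [hp hx hy]; exists p; split => // z.
by rewrite !inE => /orP[] /eqP ->.
Qed.

End Whitney.

Section Part.
Variables (T : finType) (e : rel T).
Hypotheses (e_sym : symmetric e) (e_irr : irreflexive e).

Definition part (f : {set T}) (w : T) (X : pred T) :=
  [/\ ~~ X w,
      exists s t, [/\ f = [set s; t], X s, t != w & ~~ X t] &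
      forall x y, e x y -> X x -> y != w -> ~~ X y -> [set x; y] = f].

Definition flip (w : T) (X : pred T) : pred T := fun x => (x != w) && ~~ X x.

Lemma part_flip f w X : part f w X -> part f w (flip w X).
Proof.
case=> hw [s [t [Ef hs tw ht]]] hc; split.
- by rewrite /flip eqxx.
- exists t, s; split.
  + by rewrite Ef setUC.
  + by rewrite /flip tw ht.
  + by apply/eqP => E; move: hw; rewrite -E hs.
  + by rewrite /flip negb_and negbK hs orbT.
- move=> x y hxy /andP[xw xX] yw hy.
  have yX : X y by move: hy; rewrite /flip yw /= negbK.
  by rewrite setUC; apply: hc => //; rewrite e_sym.
Qed.

Lemma X_neq f w X x : part f w X -> X x -> x != w.
Proof. by case=> hw _ _ hx; apply/eqP => E; move: hw; rewrite -E hx. Qed.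

Lemma H1 f w Z x q : part f w Z -> path e x q -> Z x ->
  all (fun y => y != w) q -> (forall S, S \in ep x q -> S != f) -> all Z q.
Proof.
case=> _ _ hc; elim: q x => [|y q IH] x //= /andP[hxy hp] hx /andP[yw hq] hS.
have hy : Z y.
  apply: contraT => hy; have := hS [set x; y]; rewrite inE eqxx /= => /(_ isT).
  by rewrite (hc _ _ hxy hx yw hy) eqxx.
rewrite hy /=; apply: (IH y) => // S hS'; apply: hS; by rewrite inE hS' orbT.
Qed.

Lemma side_or f w X y : part f w X -> y != w ->
  exists Z, [/\ part f w Z, Z y &
    forall a b, X a -> flip w X b -> ~~ Z a || ~~ Z b].
Proof.
move=> hP yw; case: (boolP (X y)) => hy.
  exists X; split => // a b _ /andP[_ ->]; by rewrite orbT.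
exists (flip w X); split; first exact: part_flip.
  by rewrite /flip yw hy.
by move=> a b ha _; rewrite /flip ha andbF.
Qed.

Lemma other_side f w Z u y : part f w Z -> Z y -> [set u; y] = f -> ~~ Z u.
Proof.
case=> _ [s [t [Ef hs tw ht]]] _ hy E.
rewrite Ef in E; case: (set2_eq E) => [[_ Ey]|[-> _]] //.
by move: ht; rewrite -Ey hy.
Qed.

Lemma crossing f w X p a b : part f w X -> gcycle e p ->
  a \in p -> X a -> b \in p -> flip w X b -> w \in p /\ f \in cycle_edges p.
Proof.
move=> hP hp ha hXa hb hYb.
have [ps Up pc] := hp.
have claimA : w \in p.
  apply: contraT => wp.
  have allw : forall y, y \in p -> y != w.
    by move=> y hy; apply/eqP => E; move: wp; rewrite -E hy.
  case: (boolP (f \in cycle_edges p)) => hf.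
    case/(mem_cycle_edges _ Up): hf => u hu Ef.
    case: (rot_to hu) => i q hrot.
    have hp1 : gcycle e (u :: q) by rewrite -hrot; apply: gcycle_rot.
    have inp : forall z, (z \in u :: q) = (z \in p) by move=> z; rewrite -hrot mem_rot.
    have Enext : next (u :: q) u = next p u by rewrite -hrot next_rot.
    have [ps1 Up1 pc1] := hp1.
    case: q ps1 Up1 pc1 hp1 inp Enext hrot => [|y q'] // ps1 Up1 pc1 hp1 inp Enext hrot.
    have Ey : next (u :: y :: q') u = y by rewrite /= eqxx.
    rewrite Ey in Enext; rewrite -Enext in Ef.
    have Uce := uniq_cycle_edges Up1 ps1.
    rewrite cycle_edges_cons /= in Uce; case/andP: Uce => hnin _.
    have hS : forall S, S \in ep y (rcons q' u) -> S != f.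
      by move=> S hS; apply/eqP => E; move: hnin; rewrite -Ef -E hS.
    move: pc1; rewrite /= => /andP[_ hpath].
    have yw : y != w by apply: allw; rewrite -inp !inE eqxx orbT.
    case: (side_or hP yw) => Z [hZ hZy _].
    have hall : all (fun z => z != w) (rcons q' u).
      apply/allP => z; rewrite mem_rcons => hz; apply: allw; rewrite -inp.
      by move: hz; rewrite !inE => /orP[->|->]; rewrite ?orbT.
    have := H1 hZ hpath hZy hall hS.
    move/allP => /(_ u); rewrite mem_rcons inE eqxx => /(_ isT) hZu.
    by move: (other_side hZ hZy (esym Ef)); rewrite hZu.
  case: (rot_to ha) => i q hrot.
  have hp1 : gcycle e (a :: q) by rewrite -hrot; apply: gcycle_rot.
  have inp : forall z, (z \in a :: q) = (z \in p) by move=> z; rewrite -hrot mem_rot.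
  have [_ _ pc1] := hp1.
  have hS : forall S, S \in ep a (rcons q a) -> S != f.
    move=> S hS; apply/eqP => E; move: hf.
    by rewrite -(cycle_edges_rot i _ Up) hrot cycle_edges_cons -E hS.
  have hall : all (fun z => z != w) (rcons q a).
    apply/allP => z; rewrite mem_rcons => hz; apply: allw; rewrite -inp.
    by move: hz; rewrite !inE => /orP[->|->]; rewrite ?orbT.
  have := H1 hP pc1 hXa hall hS.
  move/allP => /(_ b); rewrite mem_rcons -/(b \in a :: q) inp hb => /(_ isT).
  by case/andP: hYb => _ /negbTE ->.
split => //.
apply: contraT => hf.
case: (rot_to claimA) => i q hrot.
have hp1 : gcycle e (w :: q) by rewrite -hrot; apply: gcycle_rot.
have inp : forall z, (z \in w :: q) = (z \in p) by move=> z; rewrite -hrot mem_rot.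
have [ps1 Up1 pc1] := hp1.
case: q ps1 Up1 pc1 hp1 inp hrot => [|y q'] // ps1 Up1 pc1 hp1 inp hrot.
have hS : forall S, S \in ep y q' -> S != f.
  move=> S hS; apply/eqP => E; move: hf.
  rewrite -(cycle_edges_rot i _ Up) hrot cycle_edges_cons /= ep_rcons.
  by rewrite inE mem_rcons inE -E hS !orbT.
move: pc1; rewrite /= rcons_path => /and3P[_ hpath _].
move: Up1; rewrite /= inE negb_or => /andP[/andP[wy wq'] /andP[yq' Uq']].
have yw : y != w by rewrite eq_sym.
have hall : all (fun z => z != w) q'.
  by apply/allP => z hz; apply/eqP => E; move: wq'; rewrite -E hz.
case: (side_or hP yw) => Z [hZ hZy hab].
have := H1 hZ hpath hZy hall hS => /allP hZq.
have inZ : forall z, z \in p -> z != w -> Z z.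
  move=> z; rewrite -inp !inE => /orP[/eqP->|/orP[/eqP->|hz]]; rewrite ?eqxx //.
  by move=> _; apply: hZq.
have aw : a != w by apply: X_neq hP hXa.
have bw : b != w by case/andP: hYb.
by move: (hab a b hXa hYb); rewrite (inZ a ha aw) (inZ b hb bw).
Qed.

Lemma del_edge_sym f : symmetric (del_edge e f).
Proof. by move=> a b; rewrite /del_edge /= e_sym setUC. Qed.

Lemma del_edge_irr f : irreflexive (del_edge e f).
Proof. by move=> a; rewrite /del_edge /= e_irr. Qed.

Lemma rel_on_sym (r : rel T) A : symmetric r -> symmetric (rel_on r A).
Proof. by move=> hs a b; rewrite /rel_on /= hs; congr (_ && _); rewrite andbC. Qed.

Lemma avoid_step (f : {set T}) v a b : v \in f -> rel_on e (~: [set v]) a b ->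
  rel_on (del_edge e f) (~: [set v]) a b.
Proof.
move=> hv /and3P[hab ha hb]; rewrite /rel_on /del_edge /= hab ha hb /= andbT.
apply/eqP => E; move: hv; rewrite -E !inE => /orP[] /eqP E2.
  by move: ha; rewrite -E2 !inE eqxx.
by move: hb; rewrite -E2 !inE eqxx.
Qed.

Lemma part_exists f : two_connected e -> f \in edges e ->
  ~ two_connected (del_edge e f) -> exists w X, part f w X.
Proof.
move=> [n3 hc hcv] /edgesP [s [t [hst Ef]]] hn.
have st : s != t by apply/eqP => E; move: hst; rewrite E e_irr.
have sf : s \in f by rewrite Ef !inE eqxx.
have tf : t \in f by rewrite Ef !inE eqxx orbT.
have [w hw] : exists w, ~ connected_on (del_edge e f) (~: [set w]).
  apply: NNPP => hne; apply: hn; split => //.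
    move=> x y _ _.
    case: (third_vertex s t n3) => z [zs zt].
    have hz : forall u, connect (rel_on (del_edge e f) setT) z u.
      move=> u; case: (eqVneq u s) => [->|us].
        apply: (connect_sub (e := rel_on e (~: [set t]))).
          move=> a b h; apply: connect1; case/and3P: (avoid_step tf h) => h1 _ _.
          by rewrite /rel_on /= h1 !inE.
        by apply: hcv; rewrite !inE // eq_sym.
      apply: (connect_sub (e := rel_on e (~: [set s]))).
        move=> a b h; apply: connect1; case/and3P: (avoid_step sf h) => h1 _ _.
        by rewrite /rel_on /= h1 !inE.
      by apply: hcv; rewrite !inE ?zs // eq_sym.
    have hsym : connect_sym (rel_on (del_edge e f) setT).
      by apply: sym_connect_sym; apply: rel_on_sym; apply: del_edge_sym.
    by apply: connect_trans (hz y); rewrite hsym.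
  move=> v; apply: NNPP => hv; apply: hne; by exists v.
have [x [y [hx [hy hxy]]]] : exists x y, [/\ x \in ~: [set w], y \in ~: [set w] &
    ~ connect (rel_on (del_edge e f) (~: [set w])) x y].
  apply: NNPP => hne; apply: hw => x y hx hy; apply: NNPP => hxy.
  by apply: hne; exists x, y.
set E' := rel_on (del_edge e f) (~: [set w]).
have Esym : connect_sym E'.
  by apply: sym_connect_sym; apply: rel_on_sym; apply: del_edge_sym.
have wf : w \notin f.
  apply/negP => wf; apply: hxy.
  apply: (connect_sub (e := rel_on e (~: [set w]))); last exact: hcv.
  by move=> a b h; apply: connect1; apply: avoid_step.
have sw : s != w by apply/eqP => E; move: wf; rewrite -E sf.
have tw : t != w by apply/eqP => E; move: wf; rewrite -E tf.
exists w, (fun z => (z != w) && connect E' s z); split.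
- by rewrite eqxx.
- exists s, t; split => //; first by rewrite sw connect0.
  rewrite tw /=; apply/negP => hst'.
  have K : forall z, connect (rel_on e (~: [set w])) s z -> connect E' s z.
    move=> z hz; apply: (connect_closed_P (P := fun z => connect E' s z) _ (connect0 _ _) hz).
    move=> a b /= ha hab; case: (eqVneq [set a; b] f) => Eab.
      have : b \in f by rewrite -Eab !inE eqxx orbT.
      by rewrite Ef !inE => /orP[] /eqP ->.
    apply: connect_trans ha (connect1 _).
    by case/and3P: hab => h1 h2 h3; rewrite /E' /rel_on /del_edge /= h1 h2 h3 Eab.
  have sin : s \in ~: [set w] by rewrite !inE.
  have := K x (hcv w s x sin hx); have := K y (hcv w s y sin hy).
  by move=> hy' hx'; apply: hxy; apply: connect_trans hy'; rewrite Esym.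
- move=> a b hab /andP[aw ha] bw; rewrite bw /= => hb.
  apply: NNPP => hne; move/negP: hb; apply.
  apply: connect_trans ha (connect1 _).
  rewrite /E' /rel_on /del_edge /= hab !inE aw bw /= andbT.
  by apply/eqP.
Qed.

Definition forces (f g : {set T}) :=
  exists S : {set T}, #|S| = 2 /\ forall p, gcycle e p ->
    (forall x, x \in S -> x \in p) -> f \in cycle_edges p /\ g \in cycle_edges p.

Lemma forcesC f g : forces f g -> forces g f.
Proof. by case=> S [hS h]; exists S; split => // p hp hSp; case: (h p hp hSp). Qed.

Lemma good_sides f g w1 Z1 w2 Z2 x y : part f w1 Z1 -> part g w2 Z2 ->
  Z1 x -> Z2 x -> flip w1 Z1 y -> flip w2 Z2 y -> forces f g.
Proof.
move=> hP1 hP2 h1x h2x h1y h2y.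
have xy : x != y by apply/eqP => E; move: h1y; rewrite /flip -E h1x andbF.
exists [set x; y]; split; first by rewrite cards2 xy.
move=> p hp hS.
have hx : x \in p by apply: hS; rewrite !inE eqxx.
have hy : y \in p by apply: hS; rewrite !inE eqxx orbT.
by split; [case: (crossing hP1 hp hx h1x hy h1y)|case: (crossing hP2 hp hx h2x hy h2y)].
Qed.

Lemma deg f g w1 Z1 w2 Z2 : part f w1 Z1 -> part g w2 Z2 ->
  (forall x, Z1 x -> x = w2) -> forces f g.
Proof.
move=> hP1 hP2 hsub.
have [_ [s1 [t1 [Ef hs1 _ _]]] hc1] := hP1.
have [_ [s2 [t2 [Eg hs2 tw2 ht2]]] _] := hP2.
have Es1 := hsub _ hs1.
have s2t2 : s2 != t2 by apply/eqP => E; move: ht2; rewrite -E hs2.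
exists [set s2; t2]; split; first by rewrite cards2 s2t2.
move=> p hp hS.
have h2 : s2 \in p by apply: hS; rewrite !inE eqxx.
have h3 : t2 \in p by apply: hS; rewrite !inE eqxx orbT.
have ht2' : flip w2 Z2 t2 by rewrite /flip tw2 ht2.
case: (crossing hP2 hp h2 hs2 h3 ht2') => hw2 hg; split => //.
have [ps Up pc] := hp.
have hs1p : s1 \in p by rewrite Es1.
have nbr : forall y, e s1 y -> y != w1 -> [set s1; y] = f.
  move=> y hy yw; apply: hc1 => //; apply/negP => hZ.
  by move: hy; rewrite (hsub _ hZ) -Es1 e_irr.
have npn := next_prev_neq Up ps hs1p.
case: (eqVneq (next p s1) w1) => hn.
  have pw : prev p s1 != w1 by rewrite -hn eq_sym.
  have := nbr _ _ pw; rewrite e_sym (prev_cycle pc hs1p) => /(_ isT) Ef'.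
  apply/(mem_cycle_edges _ Up); exists (prev p s1); first by rewrite mem_prev.
  by rewrite -Ef' (next_prev Up) setUC.
have := nbr _ (next_cycle pc hs1p) hn => Ef'.
by apply/(mem_cycle_edges _ Up); exists s1.
Qed.

Lemma flip_flip w (X : pred T) x : (forall z, X z -> z != w) -> X x -> flip w (flip w X) x.
Proof. by move=> hX hx; rewrite /flip (hX _ hx) /= hx. Qed.

Lemma min_pair f g w1 X1 w2 X2 : part f w1 X1 -> part g w2 X2 -> forces f g.
Proof.
move=> hP1 hP2.
have hF1 := part_flip hP1; have hF2 := part_flip hP2.
have n1 : forall z, X1 z -> z != w1 by move=> z; apply: X_neq hP1.
have n2 : forall z, X2 z -> z != w2 by move=> z; apply: X_neq hP2.
case: (classic (exists x, X1 x /\ X2 x)) => A;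
case: (classic (exists y, flip w1 X1 y /\ flip w2 X2 y)) => B;
case: (classic (exists x, X1 x /\ flip w2 X2 x)) => C;
case: (classic (exists y, flip w1 X1 y /\ X2 y)) => D;
try (case: A => x [h1 h2]; case: B => y [h3 h4];
     exact: (good_sides hP1 hP2 h1 h2 h3 h4));
try (case: C => x [h1 h2]; case: D => y [h3 h4];
     exact: (good_sides hP1 hF2 h1 h2 h3 (flip_flip n2 h4))).
all: first
  [ apply: (deg hP1 hP2) => x hx; apply: NNPP => xw;
    case: (boolP (X2 x)) => h;
      [by apply: A; exists x | by apply: C; exists x; split => //; rewrite /flip h andbT; apply/eqP]
  | apply: forcesC; apply: (deg hP2 hP1) => x hx; apply: NNPP => xw;
    case: (boolP (X1 x)) => h;
      [by apply: A; exists x | by apply: D; exists x; split => //; rewrite /flip h andbT; apply/eqP]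
  | apply: forcesC; apply: (deg hF2 hP1) => x hx; apply: NNPP => xw;
    case: (boolP (X1 x)) => h;
      [by apply: C; exists x | by apply: B; exists x; split => //; rewrite /flip h andbT; apply/eqP]
  | apply: (deg hF1 hP2) => x hx; apply: NNPP => xw;
    case: (boolP (X2 x)) => h;
      [by apply: D; exists x | by apply: B; exists x; split => //; rewrite /flip h andbT; apply/eqP] ].
Qed.

End Part.

Section PartB.
Variables (T : finType) (e : rel T).
Hypotheses (e_sym : symmetric e) (e_irr : irreflexive e).

Lemma del_edges f S : S \in edges (del_edge e f) -> S \in edges e /\ S != f.
Proof.
case/edgesP => x [y [/andP[hxy hne] ->]]; split => //.
exact: set2_edges.
Qed.

Lemma gcycle_del f p : gcycle (del_edge e f) p -> gcycle e p.
Proof.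
case=> h1 h2 h3; split => //; apply: (sub_cycle _ h3).
by move=> a b /andP[].
Qed.

Lemma part_b : two_connected e ->
  (crx e 2 = #|edges e| <-> min_two_connected e).
Proof.
move=> H.
have hF := in_F2 e_sym e_irr H.
rewrite (crx_spec hF); split.
  move=> hng; split => // f hf H'; apply: hng.
  have dsym := del_edge_sym e_sym f; have dirr := del_edge_irr e_irr f.
  case/edgesP: (hf) => s [t [hst Ef]].
  have st : s != t by apply/eqP => E; move: hst; rewrite E e_irr.
  case: (whitney dsym dirr H' st) => p0 [hp0 _ _].
  case: (first_edge hp0) => g hg.
  case: (del_edges (cycle_edges_edges hp0 hg)) => hgE hgf.
  exists f, g; split => //; first by rewrite eq_sym.
  move=> S /eqP /cards2P [x [y [xy ->]]].
  case: (whitney dsym dirr H' xy) => p [hp hx hy].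
  exists p; split; first exact: gcycle_del hp.
    by move=> z; rewrite !inE => /orP[] /eqP ->.
  apply/negP => /andP[hfp _].
  by case: (del_edges (cycle_edges_edges hp hfp)); rewrite eqxx.
case=> _ hmin [f [g [hf hg hfg hgood]]].
case: (part_exists e_sym e_irr H hf (hmin f hf)) => w1 [X1 hP1].
case: (part_exists e_sym e_irr H hg (hmin g hg)) => w2 [X2 hP2].
case: (min_pair e_sym e_irr hP1 hP2) => S [hS hforce].
case: (hgood S hS) => p [hp hSp hn].
case: (hforce p hp hSp) => h1 h2.
by move: hn; rewrite h1 h2.
Qed.

End PartB.

Unset Implicit Arguments.

Theorem theorem2p4 (T : finType) (e : rel T)
  (e_sym : symmetric e) (e_irr : irreflexive e) (n_ge3 : 3 <= #|T|) :
  ((forall v : T, exists p, gcycle e p /\ v \in p) ->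
     (crx e 1 = #|edges e| <-> is_cycle_graph e))
  /\ (two_connected e ->
     (crx e 2 = #|edges e| <-> min_two_connected e))
  /\ (hamiltonian e -> forall k, 1 <= k <= #|T| ->
     (crx e k = #|edges e| <-> is_cycle_graph e)).
Proof.
split; first exact: part_a e_sym e_irr n_ge3.
split; first exact: part_b e_sym e_irr.
move=> hH k hk; exact: (part_c e_sym hH hk).
Qed.
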